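(* Let $n\ge 1$, $d_1,\dots,d_n\ge 1$, $L_i\in\mathbb{C}^{d_i\times d_i}$ ($i=1,\dots,n$) and $C_{i,i-1}\in\mathbb{C}^{d_i\times d_{i-1}}$ ($i=2,\dots,n$). Assume: (i) each $L_i$ is invertible and diagonalizable, $L_iV_i=V_i\Lambda_i$ with $V_i$ invertible and $\Lambda_i=\mathrm{diag}(\lambda_{i,1},\dots,\lambda_{i,d_i})$; (ii) $\sigma(L_i)\cap\sigma(L_j)=\emptyset$ for all $i\neq j$; (iii) $\|L_1\|<\|L_2\|<\cdots<\|L_n\|\le 1$. Then for every $i\in\{1,\dots,n\}$, every $x=(x_1,\dots,x_n)\in\mathbb{C}^{d_1}\times\cdots\times\mathbb{C}^{d_n}$ and every integer $t\ge 0$, $$\big\|\Pi_i\circ\mathsf{Lin}^{\circ t}(x)-\Pi_i\circ\mathsf{Nom}^{\circ t}(\mathsf{pert}(x))\big\|\le\sum_{j=1}^{i-1}\|D_{i,j}\|\,\big\|L_j^t\,\mathsf{pert}_j(x_1,\dots,x_j)\big\|\le\Big(\sum_{j=1}^{i-1}\|D_{i,j}\|\,\|\mathsf{pert}_j(x_1,\dots,x_j)\|\Big)\|L_i\|^t$$ (the empty sum being $0$), and $$\lim_{t\to\infty}\frac{\big\|\Pi_i\circ\mathsf{Lin}^{\circ t}(x)-\Pi_i\circ\mathsf{Nom}^{\circ t}(\mathsf{pert}(x))\big\|}{\|L_i\|^t}=0.$$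
   Context: Each $\mathbb{C}^{d_i}$ carries a fixed norm $\|\cdot\|$, and matrices carry the induced operator norm. $\Pi_i:\mathbb{C}^{d_1}\times\cdots\times\mathbb{C}^{d_n}\to\mathbb{C}^{d_i}$ is the canonical projection $\Pi_i(x_1,\dots,x_n)=x_i$. The linear chained cascade map is $\mathsf{Lin}(x_1,\dots,x_n)=(L_1x_1,\;L_2x_2+C_{2,1}x_1,\;\dots,\;L_nx_n+C_{n,n-1}x_{n-1})$ and the nominal map is $\mathsf{Nom}(x_1,\dots,x_n)=(L_1x_1,\dots,L_nx_n)$; $\mathsf{F}^{\circ t}$ denotes the $t$-fold iterate (identity for $t=0$). Matrices $D_{i,j}\in\mathbb{C}^{d_i\times d_j}$ ($1\le j\le i\le n$) are defined recursively in $i$: $D_{i,i}=I_{d_i}$; for $i\ge 2$ and $1\le j\le i-1$, let $\tilde C_{i,j}\in\mathbb{C}^{d_i\times d_j}$ have entries $[\tilde C_{i,j}]_{\ell,m}=[V_i^{-1}C_{i,i-1}D_{i-1,j}V_j]_{\ell,m}\,(1-\lambda_{j,m}/\lambda_{i,\ell})^{-1}$ and set $D_{i,j}=L_i^{-1}V_i\tilde C_{i,j}V_j^{-1}$. The maps $\mathsf{pert}_i:\mathbb{C}^{d_1}\times\cdots\times\mathbb{C}^{d_i}\to\mathbb{C}^{d_i}$ are defined recursively by $\mathsf{pert}_1(x_1)=x_1$ and $\mathsf{pert}_i(x_1,\dots,x_i)=x_i+\sum_{j=1}^{i-1}(-1)^{i-1-j}D_{i,j}\,\mathsf{pert}_j(x_1,\dots,x_j)$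 for $i\ge 2$, and $\mathsf{pert}(x_1,\dots,x_n)=(\mathsf{pert}_1(x_1),\mathsf{pert}_2(x_1,x_2),\dots,\mathsf{pert}_n(x_1,\dots,x_n))$. *)

(* Defs.v *)
From HB Require Import structures.
From mathcomp Require Import all_boot all_order all_algebra.
From mathcomp Require Import all_classical all_reals all_analysis.
From mathcomp Require Import complex.
Set Implicit Arguments.
Unset Strict Implicit.
Unset Printing Implicit Defensive.
Import Order.TTheory GRing.Theory Num.Theory.
Local Open Scope ring_scope.
Local Open Scope classical_set_scope.

(* Conventions: blocks are indexed 0-based by k : nat with k < n (paper's index k+1).
   A vector x in C^{d_0} x ... x C^{d_{n-1}} is a dependent function
   x : forall k : nat, 'cV_(d k) (components k >= n are irrelevant). *)

Section Cascade.
Variable R : realType.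
Local Notation C := (complex R).
Variable d : nat -> nat.

Definition modC (c : C) : R := ComplexField.Normc.normc c.

Definition is_norm (m : nat) (N : 'cV[C]_m -> R) : Prop :=
  [/\ forall x, N x = 0 -> x = 0,
      forall (c : C) x, N (c *: x) = modC c * N x &
      forall x y, N (x + y) <= N x + N y].

Definition opnorm (m1 m2 : nat) (N1 : 'cV[C]_m1 -> R) (N2 : 'cV[C]_m2 -> R)
  (A : 'M[C]_(m1, m2)) : R :=
  sup [set r : R | exists x : 'cV[C]_m2, N2 x <= 1 /\ r = N1 (A *m x)].

Variables (L : forall k : nat, 'M[C]_(d k))
          (Cc : forall k : nat, 'M[C]_(d k.+1, d k)) (* Cc k = C_{k+1,k} *)
          (V : forall k : nat, 'M[C]_(d k))
          (lam : forall k : nat, 'I_(d k) -> C).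

Fixpoint Dm (k : nat) : forall j : nat, 'M[C]_(d k, d j) :=
  match k with
  | 0 => fun j => conform_mx 0 (1%:M : 'M[C]_(d 0))
  | k'.+1 => fun j =>
      if j == k'.+1 then conform_mx 0 (1%:M : 'M[C]_(d k'.+1)) else
      let M := invmx (V k'.+1) *m Cc k' *m Dm k' j *m V j in
      let Ct := \matrix_(l < d k'.+1, m < d j)
                   (M l m * (1 - @lam j m / @lam k'.+1 l)^-1) in
      invmx (L k'.+1) *m V k'.+1 *m Ct *m invmx (V j)
  end.

(* pert_k (x_0,...,x_k) = x_k + sum_{j<k} (-1)^(k-1-j) D_{k,j} pert_j(x_0..x_j),
   computed with fuel: pert_aux f k = pert_k whenever f >= k. *)
Fixpoint pert_aux (x : forall k : nat, 'cV[C]_(d k)) (f : nat)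
  : forall k : nat, 'cV[C]_(d k) :=
  match f with
  | 0 => fun k => x k
  | f'.+1 => fun k =>
      x k + \sum_(j < k) ((-1) ^+ (k.-1 - j) *: (Dm k j *m pert_aux x f' j))
  end.

Definition pert (x : forall k : nat, 'cV[C]_(d k)) (k : nat) : 'cV[C]_(d k) :=
  pert_aux x k k.

Definition Lin (x : forall k : nat, 'cV[C]_(d k)) : forall k : nat, 'cV[C]_(d k) :=
  fun k => match k return 'cV[C]_(d k) with
           | 0 => L 0 *m x 0
           | k'.+1 => L k'.+1 *m x k'.+1 + Cc k' *m x k'
           end.

Definition Nom (x : forall k : nat, 'cV[C]_(d k)) : forall k : nat, 'cV[C]_(d k) :=
  fun k => L k *m x k.

End Cascade.

(* Main.v *)
Require Import Defs.
From HB Require Import structures.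
From mathcomp Require Import all_boot all_order all_algebra.
From mathcomp Require Import all_classical all_reals all_analysis.
From mathcomp Require Import complex.
From mathcomp Require Import zify ring lra.
Import Order.TTheory GRing.Theory Num.Theory numFieldNormedType.Exports.
Local Open Scope ring_scope.
Local Open Scope classical_set_scope.
Set Implicit Arguments.
Unset Strict Implicit.
Unset Printing Implicit Defensive.
Lemma pert_auxE (R : realType) (d : nat -> nat)
  (L : forall k : nat, 'M[complex R]_(d k))
  (Cc : forall k : nat, 'M[complex R]_(d k.+1, d k))
  (V : forall k : nat, 'M[complex R]_(d k))
  (lam : forall k : nat, 'I_(d k) -> complex R) x f g k :
  (k <= f)%N -> (k <= g)%N -> pert_aux L Cc V lam x f k = pert_aux L Cc V lam x g k.
Proof.
elim: f g k => [|f IH] [|g] k //=.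
- rewrite leqn0 => /eqP -> _; by rewrite big_ord0 addr0.
- move=> _; rewrite leqn0 => /eqP ->; by rewrite big_ord0 addr0.
- move=> kf kg; congr (_ + _); apply: eq_bigr => j _; congr (_ *: (_ *m _)).
  apply: IH; rewrite -ltnS; apply: leq_trans (ltn_ord j) _; by [].
Qed.

Lemma pert_auxS (R : realType) (d : nat -> nat)
  (L : forall k : nat, 'M[complex R]_(d k))
  (Cc : forall k : nat, 'M[complex R]_(d k.+1, d k))
  (V : forall k : nat, 'M[complex R]_(d k))
  (lam : forall k : nat, 'I_(d k) -> complex R) x f k :
  pert_aux L Cc V lam x f.+1 k = x k + \sum_(j < k) ((-1) ^+ (k.-1 - j) *: (Dm L Cc V lam k j *m pert_aux L Cc V lam x f j)).
Proof. by []. Qed.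

Lemma pertE (R : realType) (d : nat -> nat)
  (L : forall k : nat, 'M[complex R]_(d k))
  (Cc : forall k : nat, 'M[complex R]_(d k.+1, d k))
  (V : forall k : nat, 'M[complex R]_(d k))
  (lam : forall k : nat, 'I_(d k) -> complex R) x k :
  pert L Cc V lam x k = x k + \sum_(j < k) ((-1) ^+ (k.-1 - j) *: (Dm L Cc V lam k j *m pert L Cc V lam x j)).
Proof.
rewrite /pert; case: k => [|k]; first by rewrite big_ord0 addr0.
rewrite pert_auxS.
congr (_ + _); apply: eq_bigr => j _; congr (_ *: (_ *m _)).
apply: pert_auxE => //; rewrite -ltnS; exact: ltn_ord.
Qed.

Lemma DmKK (R : realType) (d : nat -> nat)
  (L : forall k : nat, 'M[complex R]_(d k))
  (Cc : forall k : nat, 'M[complex R]_(d k.+1, d k))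
  (V : forall k : nat, 'M[complex R]_(d k))
  (lam : forall k : nat, 'I_(d k) -> complex R) k :
  Dm L Cc V lam k k = 1%:M.
Proof. by case: k => [|k] /=; rewrite ?eqxx conform_mx_id. Qed.

Lemma DmS (R : realType) (d : nat -> nat)
  (L : forall k : nat, 'M[complex R]_(d k))
  (Cc : forall k : nat, 'M[complex R]_(d k.+1, d k))
  (V : forall k : nat, 'M[complex R]_(d k))
  (lam : forall k : nat, 'I_(d k) -> complex R) k j : j != k.+1 ->
  Dm L Cc V lam k.+1 j =
  invmx (L k.+1) *m V k.+1 *m
   (\matrix_(l < d k.+1, m < d j)
     ((invmx (V k.+1) *m Cc k *m Dm L Cc V lam k j *m V j) l m
       * (1 - @lam j m / @lam k.+1 l)^-1)) *m invmx (V j).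
Proof. by move=> /negbTE H /=; rewrite H. Qed.

Lemma mx_insert (F : fieldType) m n p (A : 'M[F]_(m,n)) (P : 'M[F]_n) (B : 'M[F]_(n,p)) :
  P \in unitmx -> A *m B = A *m P *m (invmx P *m B).
Proof. by move=> U; rewrite -mulmxA (mulmxA P) mulmxV // mul1mx. Qed.

Lemma mx_sandwich (F : fieldType) m n (E : 'M[F]_(m,n)) (P : 'M[F]_m) (Q : 'M[F]_n) :
  P \in unitmx -> Q \in unitmx -> E = P *m (invmx P *m E *m Q) *m invmx Q.
Proof. by move=> U1 U2; rewrite !mulmxA mulmxV // mul1mx -mulmxA mulmxV // mulmx1. Qed.

Lemma sylv (R : realType) (d : nat -> nat)
  (L : forall k : nat, 'M[complex R]_(d k))
  (Cc : forall k : nat, 'M[complex R]_(d k.+1, d k))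
  (V : forall k : nat, 'M[complex R]_(d k))
  (lam : forall k : nat, 'I_(d k) -> complex R) k j :
  j != k.+1 ->
  L k.+1 \in unitmx -> V k.+1 \in unitmx -> V j \in unitmx ->
  L k.+1 *m V k.+1 = V k.+1 *m diag_mx (\row_m lam k.+1 m) ->
  L j *m V j = V j *m diag_mx (\row_m lam j m) ->
  (forall l, lam k.+1 l != 0) ->
  (forall l m, lam j m != lam k.+1 l) ->
  L k.+1 *m Dm L Cc V lam k.+1 j - Dm L Cc V lam k.+1 j *m L j
    = Cc k *m Dm L Cc V lam k j.
Proof.
move=> jk UL UV UVj EK Ej lam0 lamne.
set K := k.+1 in jk UL UV EK lam0 lamne *.
rewrite DmS; last exact: jk.
set M := invmx (V K) *m Cc k *m Dm L Cc V lam k j *m V j.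
set Ct := \matrix_(l, m) _.
set D := invmx (L K) *m V K *m Ct *m invmx (V j).
have LamK : invmx (V K) *m L K *m V K = diag_mx (\row_m lam K m).
  by rewrite -mulmxA EK mulmxA mulVmx // mul1mx.
have Lamj : invmx (V j) *m L j *m V j = diag_mx (\row_m lam j m).
  by rewrite -mulmxA Ej mulmxA mulVmx // mul1mx.
set Y := invmx (V K) *m D *m V j.
have HY : diag_mx (\row_m lam K m) *m Y = Ct.
  rewrite -LamK /Y /D.
  rewrite -!mulmxA. rewrite (mulmxA (V K)) mulmxV // mul1mx.
  rewrite (mulmxA (L K)) mulmxV // mul1mx.
  rewrite !mulmxA mulVmx // mul1mx.
  by rewrite -mulmxA mulVmx // mulmx1.
have Yent : forall l m, Y l m = Ct l m / lam K l.
  move=> l m; move/matrixP: HY => /(_ l m); rewrite mul_diag_mx mxE mxE => <-.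
  rewrite mulrC mulKf //.
clearbody D.
have HM : M = invmx (V K) *m Cc k *m Dm L Cc V lam k j *m V j by [].
have Hinner : invmx (V K) *m (L K *m D - D *m L j) *m V j = M.
  rewrite mulmxBr mulmxBl.
  have -> : invmx (V K) *m (L K *m D) *m V j = diag_mx (\row_m lam K m) *m Y.
    rewrite -LamK /Y mulmxA (mx_insert (invmx (V K) *m L K) D UV).
    by rewrite !mulmxA.
  have -> : invmx (V K) *m (D *m L j) *m V j = Y *m diag_mx (\row_m lam j m).
    rewrite -Lamj /Y -!mulmxA (mx_insert D (L j *m V j) UVj).
    by rewrite !mulmxA.
  rewrite HY; apply/matrixP => l m.
  rewrite mul_mx_diag; move: Yent; clearbody Y => Yent.
  clearbody M.
  rewrite !mxE Yent /Ct !mxE.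
  have h1 : (1 - lam j m / lam K l) != 0.
    apply/eqP => /eqP; rewrite subr_eq0 => /eqP h.
    have := divfK (lam0 l) (lam j m); rewrite -h mul1r => e.
    by move: (lamne l m); rewrite e eqxx.
  move: h1 lam0; rewrite /K => h1 lam0.
  by rewrite -mulrA [_^-1 * _]mulrC -{1}(mulr1 (M l m / _)) -mulrBr divfK.
rewrite (mx_sandwich (L K *m D - D *m L j) UV UVj) Hinner HM.
by rewrite [RHS](mx_sandwich _ UV UVj) !mulmxA.
Qed.

Lemma zm (V : zmodType) (x y z w : V) : x - y + (z - w) = x - (y - (- w + z)).
Proof. rewrite opprB [-w + z]addrC !addrA [x - y + z]addrAC -[x + z - y - w]addrA -[x + z - w - y]addrA [- y - w]addrC. done. Qed.

Lemma LinS (R : realType) (d : nat -> nat)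
  (L : forall k : nat, 'M[complex R]_(d k))
  (Cc : forall k : nat, 'M[complex R]_(d k.+1, d k)) y k :
  Lin L Cc y k.+1 = L k.+1 *m y k.+1 + Cc k *m y k.
Proof. by []. Qed.

Lemma Lin0 (R : realType) (d : nat -> nat)
  (L : forall k : nat, 'M[complex R]_(d k))
  (Cc : forall k : nat, 'M[complex R]_(d k.+1, d k)) y :
  Lin L Cc y 0 = L 0 *m y 0.
Proof. by []. Qed.

Lemma mxpowS (F : comRingType) m (A : 'M[F]_m) t (v : 'cV[F]_m) :
  A ^+ t.+1 *m v = A *m (A ^+ t *m v).
Proof. by rewrite exprS -mulmxE mulmxA. Qed.

Lemma mxpow0 (F : comRingType) m (A : 'M[F]_m) (v : 'cV[F]_m) :
  A ^+ 0 *m v = v.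
Proof. by rewrite expr0 mul1mx. Qed.

Lemma Lin_iter (R : realType) (d : nat -> nat)
  (L : forall k : nat, 'M[complex R]_(d k))
  (Cc : forall k : nat, 'M[complex R]_(d k.+1, d k))
  (V : forall k : nat, 'M[complex R]_(d k))
  (lam : forall k : nat, 'I_(d k) -> complex R) n x :
  (forall k (j : nat), (j < k.+1)%N -> (k.+1 < n)%N ->
     L k.+1 *m Dm L Cc V lam k.+1 j - Dm L Cc V lam k.+1 j *m L j
       = Cc k *m Dm L Cc V lam k j) ->
  forall t k, (k < n)%N ->
  iter t (Lin L Cc) x k = L k ^+ t *m pert L Cc V lam x k
     - \sum_(j < k) ((-1) ^+ (k.-1 - j) *: (Dm L Cc V lam k j *m (L j ^+ t *m pert L Cc V lam x j))).
Proof.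
move=> HS; elim=> [|t IH] k kn.
  change (iter 0 (Lin L Cc) x) with x.
  rewrite mxpow0 pertE [X in _ = _ - X](eq_bigr (fun j : 'I_k => (-1) ^+ (k.-1 - j) *: (Dm L Cc V lam k j *m pert L Cc V lam x j))); first by rewrite addrK.
  by move=> j _; rewrite mxpow0.
rewrite iterS; case: k kn => [|k] kn.
  by rewrite Lin0 IH // !big_ord0 !subr0 mxpowS.
have kn' : (k < n)%N by apply: ltnW.
rewrite LinS (IH _ kn) (IH _ kn') mxpowS.
set p := pert L Cc V lam x.
set D := Dm L Cc V lam.
have Hterm : forall j : 'I_k.+1,
   (-1) ^+ (k.+1.-1 - j) *: (D k.+1 j *m (L j ^+ t.+1 *m p j)) =
   L k.+1 *m ((-1) ^+ (k.+1.-1 - j) *: (D k.+1 j *m (L j ^+ t *m p j)))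
   - (-1) ^+ (k.+1.-1 - j) *: (Cc k *m (D k j *m (L j ^+ t *m p j))).
  move=> j; rewrite -scalemxAr -scalerBr; congr (_ *: _).
  rewrite mxpowS !mulmxA -mulmxBl; congr (_ *m _).
  rewrite -(HS k j (ltn_ord j) kn) -mulmxBl; congr (_ *m _); by rewrite /D opprB addrC subrK.
rewrite (eq_bigr _ (fun j _ => Hterm j)) sumrB -mulmx_sumr.
rewrite mulmxBr.
have Hsum : \sum_(j < k.+1) (-1) ^+ (k.+1.-1 - j) *: (Cc k *m (D k j *m (L j ^+ t *m p j)))
   = - (Cc k *m \sum_(j < k) (-1) ^+ (k.-1 - j) *: (D k j *m (L j ^+ t *m p j)))
     + Cc k *m (L k ^+ t *m p k).
  rewrite big_ord_recr /= subnn expr0 scale1r /D DmKK mul1mx; congr (_ + _).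
  rewrite mulmx_sumr -sumrN; apply: eq_bigr => j _ /=.
  have -> : (k - j = (k.-1 - j).+1)%N.
    by move: (ltn_ord j); lia.
  by rewrite exprS mulN1r scaleNr scalemxAr.
rewrite Hsum.
rewrite mulmxBr; exact: zm.
Qed.

Lemma lam_eigvec (F : fieldType) m (A V : 'M[F]_m) (lam : 'I_m -> F) l :
  A *m V = V *m diag_mx (\row_i lam i) -> V \in unitmx ->
  exists2 v : 'rV[F]_m, v *m A = lam l *: v & v != 0.
Proof.
move=> E U; exists (delta_mx 0 l *m invmx V).
  have E' : invmx V *m A = diag_mx (\row_i lam i) *m invmx V.
    by rewrite -[LHS]mulmx1 -(mulmxV U) !mulmxA -(mulmxA _ A) E !mulmxA mulVmx // mul1mx.
  rewrite -mulmxA E' mulmxA scalemxAl; congr (_ *m _).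
  apply/matrixP => i j; rewrite mul_mx_diag !mxE.
  by case: (eqVneq j l) => [->|jl]; [rewrite mulrC | rewrite andbF mul0r mulr0].
apply/negP => /eqP H.
have : delta_mx (0 : 'I_1) l *m invmx V *m V = 0 by rewrite H mul0mx.
rewrite -mulmxA mulVmx // mulmx1 => /matrixP /(_ 0 l); rewrite !mxE !eqxx /=.
by move/eqP; rewrite oner_eq0.
Qed.

Lemma lam_eig (F : fieldType) m (A V : 'M[F]_m) (lam : 'I_m -> F) l :
  A *m V = V *m diag_mx (\row_i lam i) -> V \in unitmx -> eigenvalue A (lam l).
Proof.
move=> E U; have [v vA v0] := lam_eigvec l E U.
by apply/eigenvalueP; exists v.
Qed.

Lemma lam_neq0 (F : fieldType) m (A V : 'M[F]_m) (lam : 'I_m -> F) l :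
  A *m V = V *m diag_mx (\row_i lam i) -> V \in unitmx -> A \in unitmx -> lam l != 0.
Proof.
move=> E U UA; have [v vA v0] := lam_eigvec l E U.
apply/eqP => l0; move: vA; rewrite l0 scale0r => vA.
move: v0; have -> : v = v *m A *m invmx A by rewrite -mulmxA mulmxV // mulmx1.
by rewrite vA mul0mx eqxx.
Qed.

Section ModC.
Context {R : realType}.
Local Notation C := (complex R).

Lemma modCE (a b : R) : modC (a +i* b)%C = Num.sqrt (a ^+ 2 + b ^+ 2).
Proof. by []. Qed.

Lemma modC_ge0 (c : C) : 0 <= modC c.
Proof. by case: c => a b; rewrite modCE sqrtr_ge0. Qed.

Lemma modC0 : modC (0 : C) = 0.
Proof. exact: ComplexField.Normc.normc0. Qed.

Lemma modCM (a b : C) : modC (a * b) = modC a * modC b.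
Proof. exact: ComplexField.Normc.normcM. Qed.

Lemma modCR (r : R) : modC (r%:C)%C = `|r|.
Proof.
have -> : (r%:C)%C = (r +i* 0)%C by [].
by rewrite modCE [0 ^+ 2]expr2 mul0r addr0 sqrtr_sqr.
Qed.

Lemma modCN1 : modC (-1 : C) = 1.
Proof.
have -> : (-1 : C) = ((-1) +i* (-0))%C by [].
by rewrite oppr0 modCE [0 ^+ 2]expr2 mul0r addr0 sqrrN expr1n sqrtr1.
Qed.

Lemma modC_le (a b : R) : modC (a +i* b)%C <= `|a| + `|b|.
Proof.
rewrite modCE.
have h : 0 <= `|a| + `|b| by rewrite addr_ge0.
rewrite -(ger0_norm h) -sqrtr_sqr.
rewrite ler_sqrt; last by rewrite sqr_ge0.
have ha := normr_ge0 a; have hb := normr_ge0 b.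
rewrite -[a ^+ 2](real_normK (num_real a)) -[b ^+ 2](real_normK (num_real b)).
nra.
Qed.
End ModC.

Lemma mx_norm_coord (R : realType) p (u : 'rV[R]_p) j : `|u 0 j| <= `|u|.
Proof.
rewrite [X in _ <= X]/Num.Def.normr /= mx_normrE; apply/bigmax_geP; right => /=.
by exists (0, j).
Qed.

Lemma lip_cont (R : realType) p (f : 'rV[R]_p -> R) K : 0 < K ->
  (forall v w, `|f v - f w| <= K * `|v - w|) -> continuous f.
Proof.
move=> K0 H x s /= /nbhs_ballP [e e0 es]; apply/nbhs_ballP.
have eK : 0 < e / K by rewrite divr_gt0.
exists (e / K) => // y; rewrite -ball_normE /= => hy.
apply: es; rewrite -ball_normE /=.
apply: le_lt_trans (H x y) _.
by rewrite -ltr_pdivlMl // mulrC.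
Qed.

Lemma norm_lower (R : realType) p (f : 'rV[R]_p -> R) K : 0 < K ->
  (forall v, 0 <= f v) -> (forall v, f v = 0 -> v = 0) ->
  (forall (r : R) v, f (r *: v) = `|r| * f v) ->
  (forall v w, `|f v - f w| <= K * `|v - w|) ->
  exists2 M, 0 <= M & forall v, `|v| <= M * f v.
Proof.
move=> K0 fge0 f0 fZ fL.
have [[w w0]|none] := pselect (exists w : 'rV[R]_p, w != 0); last first.
  exists 0 => // v; rewrite mul0r.
  have [->|v0] := eqVneq v 0; first by rewrite normr0.
  by exfalso; apply: none; exists v.
set S := [set v : 'rV[R]_p | `|v| = 1].
have S0 : S !=set0.
  exists (`|w|^-1 *: w); rewrite /S /= normrZ normfV normr_id mulVf //.
  by rewrite normr_eq0.
have cS : compact S.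
  apply: bounded_closed_compact.
    exists 1; split; first exact: num_real.
    by move=> M M1 v; rewrite /S /= => ->; apply: ltW.
  have h : closed ((@Num.Def.normr _ 'rV[R]_p) @^-1` [set x : R | x = 1]).
    have hc : continuous (@Num.Def.normr _ 'rV[R]_p).
      by apply: (@lip_cont R p _ 1) => // v u; rewrite mul1r; exact: ler_dist_dist.
    by apply: preimage_closed; [move=> y _; exact: hc | exact: closed_eq].
  exact: h.
have cf : {within S, continuous f} by apply: continuous_subspaceT; exact: lip_cont fL.
have [c cS' cmin] := EVT_min_rV S0 cS cf.
have c1 : `|c| = 1 by move: cS'; rewrite inE.
have fc0 : 0 < f c.
  rewrite lt0r fge0 andbT; apply/eqP => /f0 c0.
  by move: c1; rewrite c0 normr0 => /eqP; rewrite eq_sym oner_eq0.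
exists (f c)^-1; first by rewrite invr_ge0 ltW.
move=> v; have [->|v0] := eqVneq v 0; first by rewrite normr0 mulr_ge0 // invr_ge0 ltW.
have nv0 : 0 < `|v| by rewrite normr_gt0.
have : f c <= f (`|v|^-1 *: v).
  apply: cmin; rewrite inE /S /= normrZ normfV normr_id mulVf //.
  by rewrite gt_eqF.
rewrite fZ normfV normr_id => h.
have h2 : f c * `|v| <= f v.
  by have := ler_wpM2r (ltW nv0) h; rewrite mulrAC mulVf ?gt_eqF // mul1r.
by rewrite -[`|v|](mulKf (lt0r_neq0 fc0)) ler_wpM2l // invr_ge0 ltW.

Qed.

Section NormFacts.
Context {R : realType} {m : nat} (N : 'cV[complex R]_m -> R) (HN : is_norm N).

Lemma N_eq0 x : N x = 0 -> x = 0.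
Proof. by move: HN; rewrite /is_norm => -[h _ _]; apply: h. Qed.

Lemma NZ c x : N (c *: x) = modC c * N x.
Proof. by move: HN; rewrite /is_norm => -[_ h _]; apply: h. Qed.

Lemma NT x y : N (x + y) <= N x + N y.
Proof. by move: HN; rewrite /is_norm => -[_ _ h]; apply: h. Qed.

Lemma N0 : N 0 = 0.
Proof. by rewrite -(scale0r (0 : 'cV_m)) NZ modC0 mul0r. Qed.

Lemma NN x : N (- x) = N x.
Proof. by rewrite -scaleN1r NZ modCN1 mul1r. Qed.

Lemma Nge0 x : 0 <= N x.
Proof.
have := NT x (- x); rewrite subrr N0 NN => h.
by rewrite -(@pmulr_rge0 _ 2) // mulr2n mulrDl mul1r.
Qed.

Lemma Nsign k x : N ((-1) ^+ k *: x) = N x.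
Proof. by rewrite -signr_odd; case: (odd k); rewrite ?expr1 ?expr0 ?scaleN1r ?scale1r ?NN. Qed.

Lemma NB x y : N (x - y) <= N x + N y.
Proof. by rewrite -(NN y); apply: NT. Qed.

Lemma Nsum (I : finType) (f : I -> 'cV[complex R]_m) :
  N (\sum_i f i) <= \sum_i N (f i).
Proof.
elim/big_rec2: _ => [|i y1 y2 _ H]; first by rewrite N0.
by apply: le_trans (NT _ _) _; rewrite lerD2l.
Qed.

Lemma Ndist x y : `|N x - N y| <= N (x - y).
Proof.
have h1 := NT (x - y) y; rewrite subrK in h1.
have h2 := NB x (x - y).
have e : x - (x - y) = y by rewrite opprB addrC subrK.
rewrite e in h2.
rewrite ler_norml; apply/andP; split; lra.
Qed.

End NormFacts.

Definition cE (R : realType) m (v : 'rV[R]_(m + m)) : 'cV[complex R]_m :=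
  \col_i ((v 0 (lshift m i)) +i* (v 0 (rshift m i)))%C.
Definition cF (R : realType) m (x : 'cV[complex R]_m) : 'rV[R]_(m + m) :=
  \row_j (match fintype.split j with inl i => complex.Re (x i 0) | inr i => complex.Im (x i 0) end).

Lemma split_l m n (i : 'I_m) : fintype.split (lshift n i) = inl i.
Proof. exact: (unsplitK (inl _ i)). Qed.
Lemma split_r m n (i : 'I_n) : fintype.split (rshift m i) = inr i.
Proof. exact: (unsplitK (inr _ i)). Qed.

Lemma cEF (R : realType) m (x : 'cV[complex R]_m) : cE (cF x) = x.
Proof.
apply/matrixP => i j; rewrite !mxE split_l split_r (ord1 j).
by case: (x i 0).
Qed.

Lemma cEB (R : realType) m (v w : 'rV[R]_(m + m)) : cE (v - w) = cE v - cE w.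
Proof. by apply/matrixP => i j; rewrite !mxE. Qed.

Lemma cEZ (R : realType) m (r : R) (v : 'rV[R]_(m + m)) : cE (r *: v) = (r%:C)%C *: cE v.
Proof.
apply/matrixP => i j; rewrite !mxE.
apply/eqP; rewrite eq_complex; apply/andP; split; apply/eqP; simpl;
  by rewrite mul0r ?subr0 ?addr0.
Qed.

Lemma cE_eq0 (R : realType) m (v : 'rV[R]_(m + m)) : cE v = 0 -> v = 0.
Proof.
move=> /matrixP H; apply/matrixP => i j; rewrite (ord1 i) mxE.
case: (splitP j) => k jk.
  have -> : j = lshift m k by apply/val_inj.
  by have := H k 0; rewrite !mxE => -[a b].
have -> : j = rshift m k by apply/val_inj.
by have := H k 0; rewrite !mxE => -[a b].
Qed.

Lemma cvec_sum (R : realType) m (x : 'cV[complex R]_m) :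
  x = \sum_(i < m) x i 0 *: delta_mx i 0.
Proof.
rewrite {1}(matrix_sum_delta x); apply: eq_bigr => i _.
by rewrite big_ord1.
Qed.

Lemma coord_bound (R : realType) m (N : 'cV[complex R]_m -> R) :
  is_norm N -> exists2 M, 0 <= M & forall (x : 'cV[complex R]_m) (i : 'I_m), modC (x i 0) <= M * N x.
Proof.
move=> HN.
set K0 := \sum_(i < m) N (delta_mx i 0).
have K0ge0 : 0 <= K0 by apply: sumr_ge0 => i _; exact: Nge0.
set f := fun v : 'rV[R]_(m + m) => N (cE v).
have Kb : forall u, f u <= (2 * K0) * `|u|.
  move=> u; rewrite /f (cvec_sum (cE u)).
  apply: le_trans (Nsum HN _) _.
  rewrite mulrAC /K0 mulr_sumr; apply: ler_sum => i _.
  rewrite (NZ HN) mxE ler_wpM2r ?(Nge0 HN) //.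
  apply: le_trans (modC_le _ _) _.
  by rewrite mulr2n mulrDl mul1r lerD // mx_norm_coord.
have [M M0 HM] : exists2 M, 0 <= M & forall v, `|v| <= M * f v.
  apply: (@norm_lower R (m + m) f (2 * K0 + 1)).
  - by rewrite ltr_wpDl // mulr_ge0.
  - by move=> v; exact: Nge0.
  - by move=> v /(N_eq0 HN) /cE_eq0.
  - by move=> r v; rewrite /f cEZ (NZ HN) modCR.
  - move=> v w; apply: le_trans (Ndist HN _ _) _.
    rewrite -cEB; apply: le_trans (Kb _) _.
    by rewrite ler_wpM2r // lerDl.
exists (2 * M); first by rewrite mulr_ge0.
move=> x i.
have := modC_le (cF x 0 (lshift m i)) (cF x 0 (rshift m i)).
have e : ((cF x 0 (lshift m i)) +i* (cF x 0 (rshift m i)))%C = x i 0.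
  by have := cEF x; move/matrixP => /(_ i 0); rewrite mxE.
rewrite e => h; apply: le_trans h _.
have h1 := mx_norm_coord (cF x) (lshift m i).
have h2 := mx_norm_coord (cF x) (rshift m i).
have h3 := HM (cF x).
have -> : N x = f (cF x) by rewrite /f cEF.
have h4 : 0 <= f (cF x) by exact: Nge0.
nra.
Qed.

Lemma opnorm_spec (R : realType) m1 m2 (N1 : 'cV[complex R]_m1 -> R) (N2 : 'cV[complex R]_m2 -> R)
  (A : 'M[complex R]_(m1, m2)) :
  is_norm N1 -> is_norm N2 ->
  0 <= opnorm N1 N2 A /\ forall y, N1 (A *m y) <= opnorm N1 N2 A * N2 y.
Proof.
move=> H1 H2; have [M M0 HM] := coord_bound H2.
have bnd : forall x, N1 (A *m x) <= (M * \sum_i N1 (A *m delta_mx i 0)) * N2 x.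
  move=> x; rewrite {1}(cvec_sum x) mulmx_sumr.
  apply: le_trans (Nsum H1 _) _.
  rewrite mulr_sumr mulr_suml; apply: ler_sum => i _.
  rewrite -scalemxAr (NZ H1) [X in _ <= X]mulrAC.
  by rewrite ler_wpM2r ?(Nge0 H1).
set B := M * _ in bnd.
have B0 : 0 <= B by rewrite mulr_ge0 // sumr_ge0 // => i _; exact: Nge0.
set S := [set r : R | exists x : 'cV[complex R]_m2, N2 x <= 1 /\ r = N1 (A *m x)].
have Sub : has_sup S.
  split; first by exists 0, 0; rewrite (N0 H2) mulmx0 (N0 H1).
  exists B => r [x [x1 ->]]; apply: le_trans (bnd x) _.
  by rewrite ler_piMr.
have ub := sup_upper_bound Sub.
have op0 : 0 <= opnorm N1 N2 A.
  by apply: ub; exists 0; rewrite (N0 H2) mulmx0 (N0 H1).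
split => // y.
have [->|y0] := eqVneq y 0; first by rewrite mulmx0 (N0 H1) (N0 H2) mulr0.
have c0 : 0 < N2 y.
  by rewrite lt0r Nge0 // andbT; apply/eqP => /(N_eq0 H2); apply/eqP.
have : N1 (A *m ((((N2 y)^-1)%:C)%C *: y)) <= opnorm N1 N2 A.
  apply: ub; exists ((((N2 y)^-1)%:C)%C *: y); split => //.
  rewrite (NZ H2) modCR ger0_norm; last by rewrite invr_ge0 ltW.
  by rewrite mulVf // lt0r_neq0.
rewrite -scalemxAr (NZ H1) modCR ger0_norm; last by rewrite invr_ge0 ltW.
move=> h.
have := ler_wpM2r (ltW c0) h.
by rewrite mulrAC mulVf ?lt0r_neq0 // mul1r.
Qed.

Lemma pow_bound (R : realType) m (N : 'cV[complex R]_m -> R) (A : 'M[complex R]_m) :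
  is_norm N -> forall t v, N (A ^+ t *m v) <= opnorm N N A ^+ t * N v.
Proof.
move=> H; have [hop0 ob] := opnorm_spec A H H.
elim=> [|t IH] v; first by rewrite mxpow0 expr0 mul1r.
rewrite mxpowS exprS -mulrA; apply: le_trans (ob _) _.
by rewrite ler_wpM2l.
Qed.

Lemma chain_lt (R : realType) (rho : nat -> R) n :
  (forall k, (k.+1 < n)%N -> rho k < rho k.+1) ->
  forall j k, (j < k)%N -> (k < n)%N -> rho j < rho k.
Proof.
move=> H j; elim=> [//|k IH] jk kn.
have [->|jk'] := eqVneq j k; first exact: H.
have jk2 : (j < k)%N by rewrite ltn_neqAle jk' -ltnS.
apply: lt_trans (IH jk2 (ltnW kn)) (H _ kn).
Qed.

Lemma Nom_iter (R : realType) (d : nat -> nat)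
  (L : forall k : nat, 'M[complex R]_(d k)) y t k :
  iter t (Nom L) y k = L k ^+ t *m y k.
Proof.
elim: t => [|t IH]; first by rewrite mxpow0.
by rewrite iterS /Nom IH mxpowS.
Qed.

Lemma ler_pow_mono (R : realType) (a b : R) t : 0 <= a -> a <= b -> a ^+ t <= b ^+ t.
Proof.
move=> a0 ab; elim: t => [|t IH]; first by rewrite !expr0.
by rewrite !exprS ler_pM // exprn_ge0.
Qed.

Theorem theorem1 (R : realType) (n : nat) (d : nat -> nat)
  (N : forall k : nat, 'cV[complex R]_(d k) -> R)
  (L : forall k : nat, 'M[complex R]_(d k))
  (Cc : forall k : nat, 'M[complex R]_(d k.+1, d k))
  (V : forall k : nat, 'M[complex R]_(d k))
  (lam : forall k : nat, 'I_(d k) -> complex R) :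
  (0 < n)%N ->
  (forall k, (k < n)%N -> (0 < d k)%N) ->
  (forall k, (k < n)%N -> is_norm (N k)) ->
  (* (i) *)
  (forall k, (k < n)%N ->
     [/\ L k \in unitmx, V k \in unitmx &
         L k *m V k = V k *m diag_mx (\row_m lam k m)]) ->
  (* (ii) *)
  (forall k j, (k < n)%N -> (j < n)%N -> k != j ->
     forall a, eigenvalue (L k) a -> ~~ eigenvalue (L j) a) ->
  (* (iii) *)
  (forall k, (k.+1 < n)%N -> opnorm (N k) (N k) (L k) < opnorm (N k.+1) (N k.+1) (L k.+1)) ->
  opnorm (N n.-1) (N n.-1) (L n.-1) <= 1 ->
  forall k, (k < n)%N ->
  forall x : forall j : nat, 'cV[complex R]_(d j),
    let diff t := N k (iter t (Lin L Cc) x k - iter t (Nom L) (pert L Cc V lam x) k) in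
    (forall t : nat,
       diff t <= \sum_(j < k) opnorm (N k) (N j) (Dm L Cc V lam k j)
                                * N j (L j ^+ t *m pert L Cc V lam x j)
       /\ \sum_(j < k) opnorm (N k) (N j) (Dm L Cc V lam k j)
                                * N j (L j ^+ t *m pert L Cc V lam x j)
          <= (\sum_(j < k) opnorm (N k) (N j) (Dm L Cc V lam k j) * N j (pert L Cc V lam x j))
             * opnorm (N k) (N k) (L k) ^+ t)
    /\ ((fun t : nat => diff t / opnorm (N k) (N k) (L k) ^+ t) @ \oo --> (0 : R)).
Proof.
move=> n0 dpos Hn Hi Hii Hiii Hlast k kn x diff.
pose rho := fun i => opnorm (N i) (N i) (L i).
have Hsyl : forall kk (j : nat), (j < kk.+1)%N -> (kk.+1 < n)%N ->
    L kk.+1 *m Dm L Cc V lam kk.+1 j - Dm L Cc V lam kk.+1 j *m L j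
      = Cc kk *m Dm L Cc V lam kk j.
  move=> kk j jk kkn.
  have jn : (j < n)%N := ltn_trans jk kkn.
  have [ULK UVK EK] := Hi _ kkn.
  have [ULj UVj Ej] := Hi _ jn.
  apply: sylv => //.
  - by rewrite neq_ltn jk.
  - by move=> l; exact: lam_neq0 EK UVK ULK.
  - move=> l m; apply/eqP => e.
    have neq : kk.+1 != j by rewrite neq_ltn jk orbT.
    have := Hii _ _ kkn jn neq (lam kk.+1 l) (lam_eig l EK UVK).
    by rewrite -e (lam_eig m Ej UVj).
have Hlin t := Lin_iter x Hsyl t kn.
have HNk := Hn _ kn.
have Hdiff : forall t, diff t = N k (\sum_(j < k)
    ((-1) ^+ (k.-1 - j) *: (Dm L Cc V lam k j *m (L j ^+ t *m pert L Cc V lam x j)))).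
  move=> t; rewrite /diff Hlin Nom_iter.
  by rewrite addrAC subrr add0r (NN HNk).
have rho0 : forall j, (j < n)%N -> 0 <= rho j.
  by move=> j jn; exact: (opnorm_spec _ (Hn _ jn) (Hn _ jn)).1.
have Dge0 : forall j : 'I_k, 0 <= opnorm (N k) (N j) (Dm L Cc V lam k j).
  move=> j; have jn := ltn_trans (ltn_ord j) kn.
  exact: (opnorm_spec _ HNk (Hn _ jn)).1.
have bound1 : forall t, diff t <= \sum_(j < k) opnorm (N k) (N j) (Dm L Cc V lam k j)
                                * N j (L j ^+ t *m pert L Cc V lam x j).
  move=> t; rewrite Hdiff; apply: le_trans (Nsum HNk _) _; apply: ler_sum => j _.
  rewrite (Nsign HNk); have jn := ltn_trans (ltn_ord j) kn.
  exact: (opnorm_spec _ HNk (Hn _ jn)).2.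
have term_bound : forall t (j : 'I_k) r, rho j <= r ->
    opnorm (N k) (N j) (Dm L Cc V lam k j) * N j (L j ^+ t *m pert L Cc V lam x j)
    <= opnorm (N k) (N j) (Dm L Cc V lam k j) * N j (pert L Cc V lam x j) * r ^+ t.
  move=> t j r hr; have jn := ltn_trans (ltn_ord j) kn.
  rewrite -mulrA ler_wpM2l //.
  apply: le_trans (pow_bound (L j) (Hn _ jn) t _) _.
  by rewrite mulrC ler_wpM2l ?(Nge0 (Hn _ jn)) // ler_pow_mono // rho0.
split.
  move=> t; split; first exact: bound1.
  rewrite mulr_suml; apply: ler_sum => j _; apply: term_bound.
  by apply: ltW; exact: (@chain_lt R rho n Hiii j k (ltn_ord j) kn).
case: k kn x diff Hdiff bound1 Dge0 term_bound HNk Hlin => [|k] kn x diff Hdiff bound1 Dge0 term_bound HNk Hlin.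
  have -> : (fun t : nat => diff t / opnorm (N 0) (N 0) (L 0) ^+ t) = fun=> 0.
    by apply: funext => t; rewrite Hdiff big_ord0 (N0 HNk) mul0r.
  exact: cvg_cst.
have kn' : (k < n)%N := ltnW kn.
have rk0 : 0 < rho k.+1.
  apply: le_lt_trans (rho0 0%N (leq_ltn_trans (leq0n k) kn')) _.
  exact: (@chain_lt R rho n Hiii 0 k.+1 (ltn0Sn k) kn).
have rkk : rho k < rho k.+1 by exact: Hiii.
set Cst := \sum_(j < k.+1) opnorm (N k.+1) (N j) (Dm L Cc V lam k.+1 j) * N j (pert L Cc V lam x j).
set q := rho k / rho k.+1.
have q0 : 0 <= q by rewrite divr_ge0 // ?(rho0 _ kn') // ltW.
have q1 : `|q| < 1 by rewrite ger0_norm // ltr_pdivrMr // mul1r.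
have bound2 : forall t, diff t <= Cst * rho k ^+ t.
  move=> t; apply: le_trans (bound1 t) _.
  rewrite /Cst mulr_suml; apply: ler_sum => j _; apply: term_bound.
  have jk : (j <= k)%N by rewrite -ltnS.
  case: (ltngtP j k) jk => // [jk _|-> _]; last exact: lexx.
  by apply: ltW; exact: (@chain_lt R rho n Hiii j k jk kn').
apply: (@squeeze_cvgr _ _ _ _ (fun=> 0) (fun t => Cst * q ^+ t)).
- apply: nearW => t; apply/andP; split.
    by apply: divr_ge0; [rewrite Hdiff; exact: (Nge0 HNk) | apply: exprn_ge0; exact: ltW].
  change (opnorm (N k.+1) (N k.+1) (L k.+1)) with (rho k.+1).
  rewrite /q expr_div_n mulrA ler_pdivrMr ?exprn_gt0 // divfK; first exact: bound2.
  by rewrite expf_neq0 // lt0r_neq0.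

- exact: cvg_cst.
- rewrite -(mulr0 Cst); have hc := cvg_expr q1.
  by apply: (@cvgMr _ _ _ _ _ Cst _ hc); exact: eventually_filter.
Qed.
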